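(* Let $A$ and $B$ be Latin squares of order $n$. Then $A$ and $B$ are weak orthogonal if and only if they are left orthogonal.
   Context: $\{\ket k\}_{k=0}^{n-1}$ is the computational basis of $\mathbb C^n$. A quantum Latin square (QLS) of order $n$ is an $n\times n$ array of vectors of $\mathbb C^n$ in which every row and every column is an orthonormal basis; the entry in column $i$, row $j$ of $\mathcal Q$ is $\ket{Q_{ij}}$. A Latin square is a QLS all of whose entries are computational basis states; identify it with the array of labels $L_{ij}\in\{0,\dots,n-1\}$ where $\ket{L_{ij}}$ is the entry. Two QLSs $\mathcal P,\mathcal Q$ are weak orthogonal if for all $i,j$ there is a unique $t$ with $\sum_{k=0}^{n-1}\ket k\langle Q_{ki}|P_{kj}\rangle=\ket t$. Two Latin squares $A,B$ are orthogonal if the pairs $(A_{ij},B_{ij})$ over all positions $(i,j)$ give all $n^2$ pairs of labels. The left conjugate of a Latin square $L$ is the Latin square $L'$ defined by $L'_{ik}=j$ if and only if $L_{ij}=k$ (left division in the quasigroup with Cayley table $L$). Two Latin squares are left orthogonal if their left conjugates are orthogonal. *)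

(* Defs.v *)
From HB Require Import structures.
From mathcomp Require Import all_boot all_order all_algebra all_field.
Set Implicit Arguments. Unset Strict Implicit. Unset Printing Implicit Defensive.
Import GRing.Theory Num.Theory.
Local Open Scope ring_scope.

Definition ket (n : nat) (k : 'I_n) : 'cV[algC]_n := delta_mx k 0.

Definition braket (n : nat) (u v : 'cV[algC]_n) : algC :=
  \sum_(k < n) (u k 0)^* * v k 0.

(* An n x n array of vectors of C^n; Q i j is the entry in column i, row j. *)
Definition array (n : nat) := 'I_n -> 'I_n -> 'cV[algC]_n.

Definition weak_orthogonal (n : nat) (P Q : array n) : Prop :=
  forall i j : 'I_n, exists! t : 'I_n,
    \sum_(k < n) braket (Q k i) (P k j) *: ket k = ket t.

(* Latin squares as label arrays L i j (column i, row j): every row and every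
   column contains each label exactly once. *)
Definition latin_square (n : nat) (L : 'I_n -> 'I_n -> 'I_n) : Prop :=
  (forall i, injective (L i)) /\ (forall j, injective (fun i => L i j)).

Definition qls_of (n : nat) (L : 'I_n -> 'I_n -> 'I_n) : array n :=
  fun i j => ket (L i j).

Definition orthogonal (n : nat) (A B : 'I_n -> 'I_n -> 'I_n) : Prop :=
  forall a b : 'I_n, exists i j : 'I_n, A i j = a /\ B i j = b.

(* Left conjugate: L' i k = j iff L i j = k (well defined for Latin squares). *)
Definition left_conj (n : nat) (L : 'I_n -> 'I_n -> 'I_n) : 'I_n -> 'I_n -> 'I_n :=
  fun i k => odflt k [pick j | L i j == k].

Definition left_orthogonal (n : nat) (A B : 'I_n -> 'I_n -> 'I_n) : Prop :=
  orthogonal (left_conj A) (left_conj B).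

(* Main.v *)
Require Import Defs.
From mathcomp Require Import all_boot all_order all_algebra all_field.
Set Implicit Arguments. Unset Strict Implicit. Unset Printing Implicit Defensive.
Import GRing.Theory Num.Theory.

Lemma surj_inj_fin (T : finType) (f : T -> T) :
  (forall y, exists x, f x = y) -> injective f.
Proof.
move=> Hs.
pose g y := odflt y [pick x | f x == y].
have fg : cancel g f.
  move=> y; rewrite /g; case: pickP => [x /eqP //|H].
  by have [x Hx] := Hs y; move: (H x); rewrite Hx eqxx.
have [h gh hg] := injF_bij (can_inj fg).
have fh : forall x, f x = h x by move=> x; rewrite -(hg x) fg.
by move=> x y; rewrite !fh => /(can_inj hg).
Qed.

Lemma lconjK (n : nat) (L : 'I_n -> 'I_n -> 'I_n) i j :
  injective (L i) -> left_conj L i (L i j) = j.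
Proof.
move=> inj; rewrite /left_conj; case: pickP => [x /eqP H|H] /=.
  exact: inj.
by move: (H j); rewrite eqxx.
Qed.

Lemma conjK (n : nat) (L : 'I_n -> 'I_n -> 'I_n) i k :
  injective (L i) -> L i (left_conj L i k) = k.
Proof.
move=> inj; have [h _ hL] := injF_bij inj.
by rewrite -(hL k) lconjK.
Qed.

Local Open Scope ring_scope.

Lemma braket_ket (n : nat) (a b : 'I_n) :
  braket (ket a) (ket b) = (a == b)%:R.
Proof.
rewrite /braket (bigD1 a) //= big1 ?addr0.
  rewrite /ket !mxE !eqxx /= andbT eq_sym.
  by case: eqP => _; rewrite ?conjC1 ?mul1r // conjC0 mul0r.
move=> k nk; rewrite /ket !mxE (negbTE nk) /= conjC0 mul0r //.
Qed.

Lemma sum_ket (n : nat) (c : 'I_n -> algC) m :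
  (\sum_(k < n) c k *: ket k) m 0 = c m.
Proof.
rewrite summxE (bigD1 m) //= big1 ?addr0.
  by rewrite !mxE !eqxx mulr1.
by move=> k nk; rewrite !mxE eq_sym (negbTE nk) mulr0.
Qed.

Theorem lemma21 (n : nat) (A B : 'I_n -> 'I_n -> 'I_n) :
  latin_square A -> latin_square B ->
  (weak_orthogonal (qls_of A) (qls_of B) <-> left_orthogonal A B).
Proof.
move=> [Ar Ac] [Br Bc].
have vecE : forall i j, \sum_(k < n) braket (qls_of B k i) (qls_of A k j) *: ket k
    = \sum_(k < n) (B k i == A k j)%:R *: ket k.
  by move=> i j; apply: eq_bigr => k _; rewrite /qls_of braket_ket.
split.
- move=> WO a b.
  have [t [Ht _]] := WO b a.
  rewrite vecE in Ht.
  have := congr1 (fun M : 'cV[algC]_n => M t 0) Ht; rewrite /= sum_ket /ket mxE !eqxx /=.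
  case: eqP => [E _|_ /eqP]; last by rewrite eq_sym oner_eq0.
  exists t, (A t a); split; first exact: lconjK.
  by rewrite -E; apply: lconjK.
- move=> LO.
  have R : forall a b, exists i, A i a = B i b.
    move=> a b; have [i [k [H1 H2]]] := LO a b.
    by exists i; rewrite -H1 -H2 !conjK.
  pose f (p : 'I_n * 'I_n) := (p.2, left_conj B p.1 (A p.1 p.2)).
  have finj : injective f.
    apply: surj_inj_fin => -[a b]; have [i Hi] := R a b.
    by exists (i, a); rewrite /f /= Hi lconjK.
  move=> i j; have [t Ht] := R j i.
  have uniq : forall m, (B m i == A m j) = (m == t).
    move=> m; apply/eqP/eqP => [Hm|->]; last by rewrite Ht.
    have : f (m, j) = f (t, j) by rewrite /f /= -Hm Ht !lconjK.
    by move/finj => [].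
  exists t; split.
    rewrite vecE; apply/matrixP => m z; rewrite (ord1 z) sum_ket uniq /ket mxE eqxx andbT //.
  move=> t'; rewrite vecE => Ht'.
  have := congr1 (fun M : 'cV[algC]_n => M t' 0) Ht'; rewrite /= sum_ket uniq /ket mxE !eqxx /=.
  by case: eqP => // _ /eqP; rewrite eq_sym oner_eq0.
Qed.
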